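(* Let $n\ge 4$ with $n\equiv 3\pmod 6$, and let $G=P_4\cup P_{n-5}\cup K_1$ (disjoint union of a path on $4$ vertices, a path on $n-5$ vertices, and an isolated vertex). Then $\operatorname{rank}(A_G+I_n)=\operatorname{rank}(A_{\overline G}+I_n)=n$.
   Context: All graphs are simple. $P_m$ is the path on $m$ vertices, $K_1$ a single vertex, and $\cup$ denotes disjoint union of graphs. $A_G$ denotes the $n\times n$ adjacency matrix of $G$, $\overline{G}$ the complement of $G$, $I_n$ the identity matrix, and rank is over $\mathbb{R}$. *)

(* Defs.v *)
From mathcomp Require Import all_boot all_order all_algebra.
Set Implicit Arguments. Unset Strict Implicit. Unset Printing Implicit Defensive.
Import GRing.Theory Num.Theory.
Local Open Scope ring_scope.

(* A simple graph on vertex set 'I_n is a symmetric irreflexive relation;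
   all constructions below produce such relations. *)
Notation graph n := (rel (ordinal n)).

Definition path_graph (m : nat) : graph m :=
  fun i j => (i.+1 == j :> nat) || (j.+1 == i :> nat).

Definition K1 : graph 1 := fun _ _ => false.

Definition gunion m k (g1 : graph m) (g2 : graph k) : graph (m + k) :=
  fun i j => match split i, split j with
             | inl a, inl b => g1 a b
             | inr a, inr b => g2 a b
             | _, _ => false
             end.

Definition gcompl n (g : graph n) : graph n := fun i j => (i != j) && ~~ g i j.

Definition adjmx (R : nzRingType) n (g : graph n) : 'M[R]_n :=
  \matrix_(i, j) (g i j)%:R.
Arguments path_graph m : clear implicits.
Arguments adjmx R {n} g.

(* Main.v *)
Require Import Defs.
From mathcomp Require Import all_boot all_order all_algebra ring zify.
Set Implicit Arguments. Unset Strict Implicit. Unset Printing Implicit Defensive.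
Import GRing.Theory Num.Theory.
Local Open Scope ring_scope.

Section S.
Variable R : realFieldType.

Fixpoint fseq (c : R) (i : nat) : R :=
  match i with 0 => 1 | S i1 => match i1 with 0 => - c | S i2 => - fseq c i2 - c * fseq c i1 end end.

Lemma fseqSS c i : fseq c i.+2 = - fseq c i - c * fseq c i.+1.
Proof. by []. Qed.

Lemma fseq1_3 i : fseq 1 i.+3 = fseq 1 i.
Proof. rewrite !fseqSS; ring. Qed.

Lemma fseq1_nz N : (N %% 3 != 2)%N -> fseq 1 N != 0.
Proof.
rewrite {2}(divn_eq N 3); move: (N %/ 3)%N (N %% 3)%N (ltn_pmod N (isT : (0 < 3)%N)) => k r.
move=> Hr Hr2; elim: k => [|k IH].
  rewrite mul0n add0n. case: r Hr Hr2 => [|[|[|]]] //= _ _; first exact: oner_neq0.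
  by rewrite oppr_eq0 oner_neq0.
by rewrite mulSn -addnA (_ : (3 + _ = (k*3+r).+3)%N) // fseq1_3.
Qed.

Lemma fseq0_nz k : fseq 0 (2 * k) != 0.
Proof.
elim: k => [|k IH]; first exact: oner_neq0.
by rewrite mulnS fseqSS mul0r subr0 oppr_eq0.
Qed.

Lemma rec_zero (c : R) N (y : nat -> R) :
  (forall j, (j < N)%N -> (if j is j'.+1 then y j' else 0) + c * y j + y j.+1 = 0) ->
  y N = 0 -> fseq c N != 0 -> forall i, (i <= N)%N -> y i = 0.
Proof.
move=> Hy HN Hf.
have H2 : forall i, (i.+1 <= N)%N -> y i = fseq c i * y 0 /\ y i.+1 = fseq c i.+1 * y 0.
  elim=> [|i IH] HiN.
    split; first by rewrite mul1r.
    have := Hy 0%N HiN; rewrite add0r addrC => /eqP; rewrite addr_eq0 => /eqP ->.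
    by rewrite /= mulNr.
  have [_ ->] := IH (ltnW HiN); split => //.
  have := Hy i.+1 HiN; rewrite (proj1 (IH (ltnW HiN))) (proj2 (IH (ltnW HiN))).
  rewrite addrC => /eqP; rewrite addr_eq0 => /eqP ->.
  rewrite fseqSS; ring.
have H : forall i, (i <= N)%N -> y i = fseq c i * y 0.
  case=> [|i] Hi; first by rewrite mul1r.
  exact: (proj2 (H2 i Hi)).
have y0 : y 0%N = 0.
  have := H N (leqnn N); rewrite HN => /esym/eqP; rewrite mulf_eq0 (negbTE Hf) /=.
  by move/eqP.
by move=> i Hi; rewrite H // y0 mulr0.
Qed.


Definition ktriv (c : R) m (g : graph m) := forall u : 'I_m -> R,
  (forall j, \sum_i u i * (g i j)%:R + c * u j = 0) -> forall i, u i = 0.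

Lemma delta_sum (y : nat -> R) N a :
  \sum_(0 <= i < N) y i * (i == a)%:R = if (a < N)%N then y a else 0.
Proof.
elim: N => [|N IH]; first by rewrite big_nil.
rewrite big_nat_recr //= IH ltnS [(a <= N)%N]leq_eqVlt.
case: (eqVneq N a) => [->|ne]; first by rewrite ltnn /= mulr1 add0r.
by rewrite /= mulr0 addr0.
Qed.

Lemma natr_or (a b : bool) : ~~ (a && b) -> ((a || b)%:R : R) = a%:R + b%:R.
Proof. by case: a; case: b => //= _; rewrite ?addr0 ?add0r. Qed.

Lemma ktriv_path c m : fseq c m != 0 -> ktriv c (path_graph m).
Proof.
case: m => [|m] Hf u Hu i; first by case: i.
pose y (i : nat) := if (i < m.+1)%N then u (inord i) else 0.
have yu : forall i : 'I_m.+1, y i = u i by move=> k; rewrite /y ltn_ord inord_val.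
have yout : forall a, (if (a < m.+1)%N then y a else 0) = y a.
  by move=> a; rewrite /y; case: (a < m.+1)%N.
have Hs : forall j : 'I_m.+1, \sum_i u i * (path_graph m.+1 i j)%:R =
    (if (j : nat) is j'.+1 then y j' else 0) + y j.+1.
  move=> j.
  rewrite (eq_bigr (fun i : 'I_m.+1 => y i * ((i:nat).+1 == j)%:R + y i * ((i:nat) == j.+1)%:R)); last first.
    move=> k _; rewrite -mulrDr yu /path_graph natr_or ?[(j.+1 == k)]eq_sym //.
    apply/negP => /andP [/eqP a /eqP b]; lia.
  rewrite big_split /= -(big_mkord xpredT (fun i => y i * (i.+1 == j)%:R)) -(big_mkord xpredT (fun i => y i * (i == j.+1)%:R)) delta_sum.
  case: j => [[|j] Hj] /=.
    by rewrite big1_seq ?add0r ?yout // => k _; rewrite mulr0.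
  rewrite (eq_bigr (fun i => y i * (i == j)%:R)) ?delta_sum; last by move=> k _.
  by rewrite (ltnW Hj) yout.
have Hrec := rec_zero (c:=c) (N:=m.+1) (y:=y).
rewrite -yu; apply: Hrec => //.
- move=> j Hj; have := Hu (Ordinal Hj); rewrite Hs -yu /=.
  by rewrite addrAC.
- by rewrite /y ltnn.
- exact: ltnW (ltn_ord i).
Qed.


Lemma gu_ll m k (g1 : graph m) (g2 : graph k) i j :
  gunion g1 g2 (lshift k i) (lshift k j) = g1 i j.
Proof. by rewrite /gunion -!/(unsplit (inl _)) !unsplitK. Qed.
Lemma gu_lr m k (g1 : graph m) (g2 : graph k) i j :
  gunion g1 g2 (lshift k i) (rshift m j) = false.
Proof. by rewrite /gunion -/(unsplit (inl _)) -/(unsplit (inr _)) !unsplitK. Qed.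
Lemma gu_rl m k (g1 : graph m) (g2 : graph k) i j :
  gunion g1 g2 (rshift m i) (lshift k j) = false.
Proof. by rewrite /gunion -/(unsplit (inl _)) -/(unsplit (inr _)) !unsplitK. Qed.
Lemma gu_rr m k (g1 : graph m) (g2 : graph k) i j :
  gunion g1 g2 (rshift m i) (rshift m j) = g2 i j.
Proof. by rewrite /gunion -!/(unsplit (inr _)) !unsplitK. Qed.

Lemma sum_gu_l m k (g1 : graph m) (g2 : graph k) (u : 'I_(m + k) -> R) j :
  \sum_i u i * (gunion g1 g2 i (lshift k j))%:R =
  \sum_i u (lshift k i) * (g1 i j)%:R.
Proof.
rewrite big_split_ord /= [X in _ + X]big1 ?addr0; last by move=> i _; rewrite gu_rl mulr0.
by apply: eq_bigr => i _; rewrite gu_ll.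
Qed.
Lemma sum_gu_r m k (g1 : graph m) (g2 : graph k) (u : 'I_(m + k) -> R) j :
  \sum_i u i * (gunion g1 g2 i (rshift m j))%:R =
  \sum_i u (rshift m i) * (g2 i j)%:R.
Proof.
rewrite big_split_ord /= big1 ?add0r; last by move=> i _; rewrite gu_lr mulr0.
by apply: eq_bigr => i _; rewrite gu_rr.
Qed.

Lemma ktriv_union c m k (g1 : graph m) (g2 : graph k) :
  ktriv c g1 -> ktriv c g2 -> ktriv c (gunion g1 g2).
Proof.
move=> H1 H2 u Hu i.
case: (split_ordP i) => [i1 ->|i2 ->].
  apply: (H1 (fun i => u (lshift k i))) => j.
  by rewrite -(sum_gu_l g1 g2) Hu.
apply: (H2 (fun i => u (rshift m i))) => j.
by rewrite -(sum_gu_r g1 g2) Hu.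
Qed.

Lemma ktriv_K1 : ktriv 1 K1.
Proof.
move=> u Hu i; have := Hu ord0; rewrite big1 ?add0r ?mul1r ?ord1 //.
by move=> k _; rewrite mulr0.
Qed.

Lemma irr_gu m k (g1 : graph m) (g2 : graph k) :
  irreflexive g1 -> irreflexive g2 -> irreflexive (gunion g1 g2).
Proof. by move=> H1 H2 i; rewrite /gunion; case: split. Qed.

Lemma irr_path m : irreflexive (path_graph m).
Proof. by move=> i; rewrite /path_graph orbb; apply/negP => /eqP; lia. Qed.

Lemma rank_ktriv N (M : 'M[R]_N) :
  (forall u : 'rV_N, u *m M = 0 -> u = 0) -> \rank M = N.
Proof. by move=> H; apply/eqP; exact: (inj_row_free H). Qed.


Lemma main1 k : (k %% 3 != 2)%N ->
  \rank (adjmx R (gunion (gunion (path_graph 4) (path_graph k)) K1) + 1%:M)%R = (4 + k + 1)%N.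
Proof.
move=> Hk3; apply: rank_ktriv => u Hu.
have Hk : ktriv 1 (gunion (gunion (path_graph 4) (path_graph k)) K1).
  apply: ktriv_union; last exact: ktriv_K1.
  by apply: ktriv_union; apply: ktriv_path; apply: fseq1_nz.
apply/rowP => j; rewrite mxE.
apply: (Hk (fun i => u 0 i)) => j'.
move: Hu; rewrite mulmxDr mulmx1 => /rowP/(_ j'); rewrite !mxE => H; rewrite -[RHS]H mul1r.
congr (_ + _); apply: eq_bigr => i _; by rewrite mxE.
Qed.


Lemma main2 k : ~~ odd k ->
  \rank (adjmx R (gcompl (gunion (gunion (path_graph 4) (path_graph k)) K1)) + 1%:M)%R
   = (4 + k + 1)%N.
Proof.
move=> Hodd; apply: rank_ktriv => u Hu.
set G1 := gunion (path_graph 4) (path_graph k).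
set G := gunion G1 K1.
have Girr : irreflexive G.
  apply: irr_gu; last by [].
  by apply: irr_gu; apply: irr_path.
have Hk : ktriv 0 G1.
  apply: ktriv_union; apply: ktriv_path.
    by rewrite (_ : 4 = 2 * 2)%N // fseq0_nz.
  rewrite (_ : k = 2 * k./2)%N ?fseq0_nz //.
  by rewrite mul2n -[in LHS](odd_double_half k) (negbTE Hodd).
pose s := \sum_i u 0 i.
have E : forall j, s - \sum_i u 0 i * (G i j)%:R = 0.
  move=> j; move: Hu => /rowP/(_ j); rewrite !mxE => H; rewrite -[RHS]H.
  rewrite /s -sumrB; apply: eq_bigr => i _; rewrite !mxE.
  case: (eqVneq i j) => [->|ne]; first by rewrite Girr /gcompl eqxx /= mulr0 subr0 add0r mulr1.
  rewrite /gcompl ne /= mulr0n addr0 -/G.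
  by case: (G i j); rewrite /= ?mulr1 ?subrr ?mulr0 ?subr0.
have s0 : s = 0.
  have := E (rshift (4 + k) ord0); rewrite /G sum_gu_r big1 ?subr0 //.
  by move=> i _; rewrite mulr0.
have u1 : forall i, u 0 (lshift 1 i) = 0.
  apply: (Hk (fun i => u 0 (lshift 1 i))) => j.
  have := E (lshift 1 j); rewrite /G sum_gu_l s0 sub0r mul0r addr0 => /eqP.
  by rewrite oppr_eq0 => /eqP.
have ul : u 0 (rshift (4 + k) ord0) = 0.
  move: s0; rewrite /s big_split_ord /= big1 ?add0r ?big_ord1 //.
apply/rowP => i; rewrite mxE.
case: (split_ordP i) => [i1 ->|i2 ->]; first exact: u1.
by rewrite ord1.
Qed.

End S.

Theorem proposition5p8 (R : realFieldType) (n : nat) :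
  (4 <= n)%N -> (n %% 6 = 3)%N ->
  let G := gunion (gunion (path_graph 4) (path_graph (n - 5))) K1 in
  \rank (adjmx R G + 1%:M)%R = n /\ \rank (adjmx R (gcompl G) + 1%:M)%R = n.
Proof.
move=> H4 H6 G; split.
  apply: eq_trans (main1 _ _) _; first by apply/eqP; lia.
  lia.
apply: eq_trans (main2 _ _) _; last by lia.
have h : ((n - 5) %% 2 = 0)%N by lia.
by move: h; rewrite modn2; case: odd.
Qed.
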